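(* Fix $\alpha\in(0,1)$, $\nu\in(0,\alpha)$. Let $$\widehat{\mathcal M}^+_\nu=\left\{\hat M(y'): y'\in\mathbb R^n,\ \|X^\top y-X^\top y'\|_\infty\le 2q^\nu(\{X_j\}_{j=1}^d)\right\},\qquad \widehat{\mathcal V}^+_\nu=\left\{\frac{e_{j\cdot M}^\top X_M^+}{\hat\sigma_{j\cdot M}}: M\in\widehat{\mathcal M}^+_\nu,\ j\in M\right\}.$$ Then $$P_\mu\left\{\theta_{j\cdot\hat M}\in\left(\hat\theta_{j\cdot\hat M}\pm q^{(\alpha-\nu)}(\widehat{\mathcal V}^+_\nu)\,\hat\sigma_{j\cdot\hat M}\right),\ \forall j\in\hat M\right\}\ge1-\alpha,$$ where $\hat M=\hat M(y)$.
   Context: $X\in\mathbb R^{n\times d}$ is a fixed design matrix with columns $X_1,\dots,X_d$, and $y\in\mathbb R^n$, $y\sim P_\mu$, where $y=\mu+Z$ with $Z\sim P_0$ of mean zero (a location family). A model selection rule $y\mapsto\hat M(y)\subseteq[d]$ selects a model; assume $X_M$ (the columns indexed by $M$) has full column rank for every model $M$ that can be selected. For a model $M$, the projection parameter is $\theta_M=X_M^+\mu$ and its estimate is $\hat\theta_M=X_M^+y$, where $X_M^+$ is the pseudoinverse; $\theta_{j\cdot M}$, $\hat\theta_{j\cdot M}$ denote the entries corresponding to feature $j\in M$. $e_{j\cdot M}\in\mathbb R^{|M|}$ is the canonical basis vector for feature $j$ in $M$, and $\hat\sigma_{j\cdot M}=\sqrt{e_{j\cdot M}^\top(X_M^\top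 X_M)^{-1}e_{j\cdot M}}$. For a set $\mathcal V\subseteq\mathbb R^n$ of contrasts and $\beta\in(0,1)$, $$q^\beta(\mathcal V)=\inf\left\{q: P_0\left\{\sup_{v\in\mathcal V}|v^\top Z|\le q\right\}\ge1-\beta\right\},\quad Z\sim P_0;$$ in particular $q^\nu(\{X_j\}_{j=1}^d)$ uses the contrasts $X_1,\dots,X_d$. *)

(* Defs.v *)
From HB Require Import structures.
From mathcomp Require Import all_boot all_order all_algebra.
From mathcomp Require Import all_classical all_reals all_analysis.
Set Implicit Arguments. Unset Strict Implicit. Unset Printing Implicit Defensive.
Import Order.TTheory GRing.Theory Num.Theory.
Local Open Scope classical_set_scope.
Local Open Scope ring_scope.

Section PoSI.
Variables (R : realType) (n d : nat).

(* X_M : the columns of X indexed by M (in increasing order of the index). *)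
Definition subX (X : 'M[R]_(n, d)) (M : {set 'I_d}) : 'M[R]_(n, #|M|) :=
  \matrix_(i < n, k < #|M|) X i (enum_val k).

Definition ejM (M : {set 'I_d}) (j : 'I_d) : 'cV[R]_#|M| :=
  \col_(k < #|M|) ((enum_val k == j)%:R).

(* Pseudoinverse X_M^+ of a full-column-rank X_M: (X_M^T X_M)^{-1} X_M^T. *)
Definition pinvX (X : 'M[R]_(n, d)) (M : {set 'I_d}) : 'M[R]_(#|M|, n) :=
  invmx ((subX X M)^T *m subX X M) *m (subX X M)^T.

Definition projcoef (X : 'M[R]_(n, d)) (M : {set 'I_d}) (j : 'I_d)
  (w : 'cV[R]_n) : R :=
  ((ejM M j)^T *m pinvX X M *m w) 0 0.

Definition sigmaX (X : 'M[R]_(n, d)) (M : {set 'I_d}) (j : 'I_d) : R :=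
  Num.sqrt (((ejM M j)^T *m invmx ((subX X M)^T *m subX X M) *m ejM M j) 0 0).

Definition supnorm (v : 'cV[R]_d) : R := \big[Num.max/0]_(i < d) `|v i 0|.

(* q^beta(V) = inf { q : P0 { sup_{v in V} |v^T Z| <= q } >= 1 - beta },
   with P0 the law of the noise Z, realised as Z : T -> R^n on (T, P). *)
Definition qtl {dT} {T : measurableType dT} (P : probability T R)
  (Z : T -> 'cV[R]_n) (beta : R) (V : set 'rV[R]_n) : R :=
  inf [set q : R | lee ((1 - beta)%:E)
        (P [set t | forall v, V v -> `|(v *m Z t) 0 0| <= q])].

Definition colsX (X : 'M[R]_(n, d)) : set 'rV[R]_n :=
  [set v | exists j : 'I_d, v = (col j X)^T].

Definition Mplus {dT} {T : measurableType dT} (P : probability T R)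
  (Z : T -> 'cV[R]_n) (X : 'M[R]_(n, d)) (Mhat : 'cV[R]_n -> {set 'I_d})
  (nu : R) (y : 'cV[R]_n) : set {set 'I_d} :=
  [set Mhat y' | y' in [set y' : 'cV[R]_n |
     supnorm (X^T *m y - X^T *m y') <= 2 * qtl P Z nu (colsX X)]].

Definition Vplus {dT} {T : measurableType dT} (P : probability T R)
  (Z : T -> 'cV[R]_n) (X : 'M[R]_(n, d)) (Mhat : 'cV[R]_n -> {set 'I_d})
  (nu : R) (y : 'cV[R]_n) : set 'rV[R]_n :=
  [set v | exists M, Mplus P Z X Mhat nu y M /\
     exists2 j, j \in M & v = (sigmaX X M j)^-1 *: ((ejM M j)^T *m pinvX X M)].

End PoSI.

(* Main.v *)
From HB Require Import structures.
From mathcomp Require Import all_boot all_order all_algebra.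
From mathcomp Require Import all_classical all_reals all_analysis.
From mathcomp Require Import ring lra.
Set Implicit Arguments. Unset Strict Implicit. Unset Printing Implicit Defensive.
Import Order.TTheory GRing.Theory Num.Theory.
Require Import Defs.
Local Open Scope classical_set_scope.
Local Open Scope ring_scope.

Section Quant.
Variables (R : realType) (n : nat) (dT : measure_display) (T : measurableType dT).
Variables (P : probability T R) (Z : T -> 'cV[R]_n).
Hypothesis mZ : forall i : 'I_n, measurable_fun setT (fun t => Z t i 0).

Definition ev (V : set 'rV[R]_n) (q : R) :=
  [set t | forall v, V v -> `|(v *m Z t) 0 0| <= q].

Lemma mlin (v : 'rV[R]_n) : measurable_fun setT (fun t => (v *m Z t) 0 0).
Proof.
have -> : (fun t => (v *m Z t) 0 0) =
   (fun t => \sum_(i <- index_enum 'I_n) (fun i t => v 0 i * Z t i 0) i t).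
  by apply: funext => t; rewrite !mxE.
apply: measurable_sum => i; apply: measurable_realfun.measurable_funM => //.
Qed.

Definition W (s : seq 'rV[R]_n) (t : T) : R :=
  \big[Num.max/0]_(v <- s) `|(v *m Z t) 0 0|.

Lemma mW s : measurable_fun setT (W s).
Proof.
elim: s => [|v s IH].
  have -> : W [::] = cst 0 by apply: funext => t; rewrite /W big_nil.
  exact: measurable_cst.
have -> : W (v :: s) = (fun t => `|(v *m Z t) 0 0|) \max W s.
  by apply: funext => t; rewrite /W big_cons.
apply: measurable_realfun.measurable_maxr => //.
exact: measurableT_comp (@measurable_realfun.normr_measurable R setT) (mlin v).
Qed.

Lemma le_W s v t : v \in s -> `|(v *m Z t) 0 0| <= W s t.
Proof.
elim: s => [//|w s IH]; rewrite inE /W big_cons le_max => /orP[/eqP->|/IH ->].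
  by rewrite lexx.
by rewrite orbT.
Qed.

Lemma W_ge0 s t : 0 <= W s t.
Proof. by case: s => [|w s]; rewrite /W ?big_nil ?big_cons ?le_max ?normr_ge0. Qed.

Lemma evW s q : s != [::] -> ev [set` s] q = W s @^-1` `]-oo, q].
Proof.
move=> s0; apply/seteqP; split => t /=.
- move=> H; rewrite in_itv /= /W big_seq; apply: bigmax_le => [|v vs].
  + case: s s0 H => // v s _ H; apply: le_trans (H v _) => //.
    by rewrite /= inE eqxx.
  + exact: H.
- rewrite in_itv /= => H v vs; apply: le_trans H.
  exact: le_W.
Qed.

HB.instance Definition _ s := isMeasurableFun.Build _ _ T R (W s) (mW s).

Definition WRV s : {RV P >-> R} := W s.

Lemma PevW s q : s != [::] -> P (ev [set` s] q) = cdf (WRV s) q.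
Proof. by move=> s0; rewrite (evW _ s0). Qed.

Lemma ev_nil q : ev [set` ([::] : seq 'rV[R]_n)] q = setT.
Proof. by apply/seteqP; split => t //= _ v. Qed.

Definition Sq V (b : R) := [set q : R | lee ((1 - b)%:E) (P (ev V q))].

Local Open Scope ereal_scope.

Lemma Sq_nonempty (s : seq 'rV[R]_n) (b : R) : (0 < b)%R -> Sq [set` s] b !=set0.
Proof.
move=> b0; have [->|s0] := eqVneq s [::].
  exists 0%R; rewrite /Sq /= ev_nil probability_setT lee_fin.
  by lra.
have [//|nS] := pselect (Sq [set` s] b !=set0); exfalso.
have : 1 <= (1 - b)%:E.
  apply: (cvge_to_le (cvg_cdfy1 (WRV s))).
  apply: nearW => r; rewrite -PevW //; apply/ltW; rewrite ltNge; apply/negP.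
  by move=> H; apply: nS; exists r.
by rewrite lee_fin; lra.
Qed.

Lemma ev0 (s : seq 'rV[R]_n) q : s != [::] -> (q < 0)%R -> ev [set` s] q = set0.
Proof.
case: s => // v s _ q0; apply/seteqP; split => t // H.
have := H v (mem_head _ _); rewrite leNgt => /negP; apply.
exact: lt_le_trans q0 (normr_ge0 _).
Qed.

Lemma Sq_lb (s : seq 'rV[R]_n) (b : R) : (b < 1)%R -> s != [::] ->
  lbound (Sq [set` s] b) 0%R.
Proof.
move=> b1 s0 q Sq; rewrite leNgt; apply/negP => q0; move: Sq.
by rewrite /Sq /= ev0 // measure0 lee_fin; lra.
Qed.

Lemma mev (s : seq 'rV[R]_n) q : measurable (ev [set` s] q).
Proof.
have [->|s0] := eqVneq s [::]; first by rewrite ev_nil.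
rewrite evW // -[X in measurable X]setTI; apply: mW => //.
Qed.

Lemma qtl_attained (s : seq 'rV[R]_n) (b : R) : (0 < b)%R -> (b < 1)%R ->
  (1 - b)%:E <= P (ev [set` s] (inf (Sq [set` s] b))).
Proof.
move=> b0 b1; have [->|s0] := eqVneq s [::].
  by rewrite ev_nil probability_setT lee_fin; lra.
rewrite PevW //; set q0 := inf _.
have H := @cdf_right_continuous _ _ _ _ (WRV s) q0.
apply: (cvge_to_ge H).
near=> r.
have rq : (q0 < r)%R by near: r; exact: nbhs_right_gt.
have [y Sy yr] := inf_lt (Sq_nonempty s b0) rq.
apply: le_trans Sy _; rewrite PevW //; apply: cdf_nondecreasing; exact: ltW.
Unshelve. all: by end_near.
Qed.

Lemma qtl_ge0 (s : seq 'rV[R]_n) (b : R) : (0 < b)%R -> (b < 1)%R -> s != [::] ->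
  (0 <= inf (Sq [set` s] b))%R.
Proof. by move=> b0 b1 s0; apply: lb_le_inf (Sq_nonempty s b0) (Sq_lb b1 s0). Qed.

Lemma qtl_mono (s1 s2 : seq 'rV[R]_n) (b : R) : (0 < b)%R -> (b < 1)%R ->
  s1 != [::] -> [set` s1] `<=` [set` s2] ->
  (inf (Sq [set` s1] b) <= inf (Sq [set` s2] b))%R.
Proof.
move=> b0 b1 s10 sub; apply: lb_le_inf (Sq_nonempty s2 b0) _ => x Sx.
apply: ge_inf; first by exists 0%R; exact: Sq_lb.
apply: le_trans Sx _; apply: le_measure; rewrite ?inE; try exact: mev.
by move=> t H v /sub; exact: H.
Qed.

End Quant.

Lemma le_bigmax_gen (R : realType) (I : eqType) (s : seq I) (F : I -> R) x :
  x \in s -> F x <= \big[Num.max/0]_(i <- s) F i.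
Proof.
elim: s => [//|w s IH]; rewrite inE big_cons le_max => /orP[/eqP->|/IH ->].
  by rewrite lexx.
by rewrite orbT.
Qed.

Lemma le_supnorm (R : realType) d (v : 'cV[R]_d) i : `|v i 0| <= supnorm v.
Proof.
rewrite /supnorm.
exact: (@le_bigmax_gen R _ (index_enum 'I_d) (fun i => `|v i 0|) i (mem_index_enum _)).
Qed.

Lemma supnorm_le (R : realType) d (v : 'cV[R]_d) c : 0 <= c ->
  (forall i, `|v i 0| <= c) -> supnorm v <= c.
Proof. by move=> c0 H; rewrite /supnorm; apply: bigmax_le. Qed.

Lemma sumsq0 (R : realType) n (w : 'rV[R]_n) : (w *m w^T) 0 0 <= 0 -> w = 0.
Proof.
rewrite mxE => H.
have H0 : \sum_i w 0 i * w^T i 0 = 0.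
  apply/eqP; rewrite eq_le H /=; apply: sumr_ge0 => i _; rewrite mxE.
  by rewrite -expr2 sqr_ge0.
have hnn : forall i : 'I_n, true -> 0 <= w 0 i * w^T i 0.
  by move=> k _; rewrite mxE -expr2 sqr_ge0.
apply/rowP => i; rewrite mxE.
by have := @psumr_eq0P _ _ _ _ hnn H0 i isT; rewrite mxE => /eqP; rewrite mulf_eq0 orbb => /eqP.
Qed.

Lemma unit_gram (R : realType) n k (A : 'M[R]_(n, k)) : \rank A = k ->
  A^T *m A \in unitmx.
Proof.
move=> rA; rewrite -row_free_unit -kermx_eq0.
have fAT : row_free A^T by rewrite /row_free mxrank_tr rA.
have ker : forall u : 'rV[R]_k, u *m (A^T *m A) = 0 -> u = 0.
  move=> u /(congr1 (fun m => m *m u^T)); rewrite mul0mx => h.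
  have : (u *m A^T) *m (u *m A^T)^T = 0.
    by rewrite trmx_mul trmxK !mulmxA -(mulmxA u) h.
  move=> h2; have := sumsq0 (w := u *m A^T); rewrite h2 mxE lexx => /(_ isT).
  by move/eqP; rewrite mulmx_free_eq0 // => /eqP.
apply/eqP/row_matrixP => i; rewrite row0; apply: ker.
by rewrite -row_mul mulmx_ker row0.
Qed.

Lemma prob_inter d (T : measurableType d) (R : realType) (P : probability T R)
  (A B : set T) (x y : R) : measurable A -> measurable B ->
  ((1 - x)%:E <= P A)%E -> ((1 - y)%:E <= P B)%E ->
  ((1 - (x + y))%:E <= P (A `&` B))%E.
Proof.
move=> mA mB hA hB.
have hU : (P (~` (A `&` B)) <= P (~` A) + P (~` B))%E.
  by rewrite setCI; exact: (measureU2 P (measurableC mA) (measurableC mB)).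
rewrite !probability_setC ?measurableI // in hU.
move: hA hB hU.
rewrite -(fineK (fin_num_measure P _ mA)) -(fineK (fin_num_measure P _ mB)).
rewrite -(fineK (fin_num_measure P _ (measurableI _ _ mA mB))).
rewrite !lee_fin; first lra.
exact: measurableI.
Qed.

Unset Implicit Arguments.
Local Open Scope classical_set_scope.
Local Open Scope ring_scope.

Theorem corollary4 (R : realType) (n d : nat) (dT : measure_display)
  (T : measurableType dT) (P : probability T R)
  (Z : T -> 'cV[R]_n) (mu : 'cV[R]_n) (X : 'M[R]_(n, d))
  (Mhat : 'cV[R]_n -> {set 'I_d}) (alpha nu : R) :
  0 < alpha < 1 -> 0 < nu < alpha ->
  (* the noise Z is a random vector with mean zero *)
  (forall i : 'I_n, measurable_fun setT (fun t => Z t i 0)) ->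
  (forall i : 'I_n, P.-integrable setT (fun t => (Z t i 0)%:E) /\
                    (\int[P]_t (Z t i 0)%:E = 0)%E) ->
  (* X_M has full column rank for every selectable model M *)
  (forall y' : 'cV[R]_n, \rank (subX X (Mhat y')) = #|Mhat y'|) ->
  let E := [set t | let y := mu + Z t in let M := Mhat y in
             let q := qtl P Z (alpha - nu) (Vplus P Z X Mhat nu y) in
             forall j, j \in M ->
               projcoef X M j y - q * sigmaX X M j <= projcoef X M j mu
               <= projcoef X M j y + q * sigmaX X M j] in
  measurable E ->
  ((1 - alpha)%:E <= P E)%E.
Proof.
move=> /andP[a0 a1] /andP[nu0 nua] mZ _ hrank E mE.
set b := alpha - nu.
have b0 : 0 < b by rewrite /b; lra.
have b1 : b < 1 by rewrite /b; lra.
have nu1 : nu < 1 by lra.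
pose sA := [seq (col j X)^T | j <- enum 'I_d].
have hA : colsX X = [set` sA].
  apply/seteqP; split => v /=.
  - by case=> j ->; apply/mapP; exists j => //; rewrite mem_enum.
  - by case/mapP => j _ ->; exists j.
pose qA := qtl P Z nu (colsX X).
have qAE : qA = inf (Sq P Z [set` sA] nu) by rewrite /qA /qtl hA.
pose A := ev Z [set` sA] qA.
have PA : ((1 - nu)%:E <= P A)%E by rewrite /A qAE; exact: qtl_attained.
have mA : measurable A := mev mZ _ _.
pose Mstar := [set Mhat y' | y' in
  [set y' | supnorm (X^T *m mu - X^T *m y') <= qA]].
pose vf (M : {set 'I_d}) (j : 'I_d) : 'rV[R]_n :=
  (sigmaX X M j)^-1 *: ((ejM R M j)^T *m pinvX X M).
have finV : forall (MM : set {set 'I_d}), finite_set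
    [set v | exists M, MM M /\ exists2 j, j \in M & v = vf M j].
  move=> MM; apply: (sub_finite_set _ (finite_image
    (fun p : {set 'I_d} * 'I_d => vf p.1 p.2) (@finite_finset _ setT))).
  by move=> v [M [_ [j _ ->]]]; exists (M, j).
have [ss hs] := (finite_seqP _).1 (finV Mstar).
pose qs := inf (Sq P Z [set` ss] b).
pose B := ev Z [set` ss] qs.
have PB : ((1 - b)%:E <= P B)%E by exact: qtl_attained.
have mB : measurable B := mev mZ _ _.
have PAB : ((1 - alpha)%:E <= P (A `&` B))%E.
  have -> : alpha = nu + b by rewrite /b; ring.
  exact: prob_inter.
apply: le_trans PAB _; apply: le_measure; rewrite ?inE //; first exact: measurableI.
move=> t [At Bt] /= y M q j jM.
have XZ : forall i, `|(X^T *m Z t) i 0| <= qA.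
  move=> i; have hi : [set` sA] ((col i X)^T).
    by apply/mapP; exists i; rewrite ?mem_enum.
  have := At _ hi.
  have -> : ((col i X)^T *m Z t) 0 0 = (X^T *m Z t) i 0.
    by rewrite !mxE; apply: eq_bigr => k _; rewrite !mxE.
  done.
have sA0 : sA != [::].
  apply/eqP => h; have : (col j X)^T \in sA by apply/mapP; exists j; rewrite ?mem_enum.
  by rewrite h.
have qA0 : 0 <= qA by rewrite qAE; exact: qtl_ge0.
have MstarM : Mstar M.
  exists y => //=; apply: supnorm_le => // i.
  have -> : X^T *m mu - X^T *m y = - (X^T *m Z t).
    by rewrite /y mulmxDr opprD addNKr.
  by rewrite mxE normrN.
have sub : Mstar `<=` Mplus P Z X Mhat nu y.
  move=> _ [y' hy' <-]; exists y' => //=.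
  apply: supnorm_le => [|i]; first lra.
  have -> : X^T *m y - X^T *m y' = X^T *m Z t + (X^T *m mu - X^T *m y').
    by rewrite /y mulmxDr [X^T *m mu + _]addrC -addrA.
  rewrite mxE; apply: le_trans (ler_normD _ _) _.
  have h1 := XZ i; have h2 := le_trans (le_supnorm _ i) hy'; lra.
have [sp hsp] := (finite_seqP _).1 (finV (Mplus P Z X Mhat nu y)).
have hsp' : Vplus P Z X Mhat nu y = [set` sp] by exact: hsp.
have hs' : [set v | exists M, Mstar M /\ exists2 j, j \in M & v = vf M j] = [set` ss]
  by exact: hs.
have vfin : [set` ss] (vf M j) by rewrite -hs'; exists M; split => //; exists j.
have qle : qs <= q.
  rewrite /q /qtl hsp'; apply: qtl_mono => //.
  - by apply/eqP => h; move: vfin; rewrite h.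
  - rewrite -hs' -hsp' => v [M' [MM' rest]]; exists M'; split => //; exact: sub.
have hB := Bt _ vfin.
pose u := (ejM R M j)^T *m pinvX X M.
have hy : projcoef X M j y = projcoef X M j mu + (u *m Z t) 0 0.
  by rewrite /projcoef /y mulmxDr mxE.
set D := (u *m Z t) 0 0.
have hv : (vf M j *m Z t) 0 0 = (sigmaX X M j)^-1 * D by rewrite /vf -scalemxAl mxE.
rewrite hv in hB.
have key : `|D| <= q * sigmaX X M j.
  have [s0|sneq] := eqVneq (sigmaX X M j) 0.
  - suff -> : D = 0 by rewrite normr0 s0 mulr0.
    have GU := unit_gram (hrank y).
    set A0 := subX X (Mhat y) in GU.
    set G := A0^T *m A0 in GU.
    have GT : G^T = G by rewrite /G trmx_mul trmxK.
    have HT : (invmx G)^T = invmx G by rewrite trmx_inv GT.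
    have uu : u *m u^T = (ejM R M j)^T *m invmx G *m ejM R M j.
      rewrite /u /pinvX -/A0 -/G !trmx_mul trmxK HT.
      rewrite -!mulmxA (mulmxA A0^T) -/G (mulmxA G) mulmxV // mul1mx.
      by rewrite trmxK.
    have hs2 : (u *m u^T) 0 0 <= 0.
      by rewrite uu; move/eqP: s0; rewrite /sigmaX sqrtr_eq0.
    by rewrite /D (sumsq0 hs2) mul0mx mxE.
  - have spos : 0 < sigmaX X M j by rewrite lt_def sneq sqrtr_ge0.
    rewrite normrM gtr0_norm ?invr_gt0 // in hB.
    have h := le_trans hB qle.
    have := ler_wpM2l (ltW spos) h.
    by rewrite mulrA mulfV ?mul1r // mulrC.
move: key; rewrite ler_norml => /andP[k1 k2]; rewrite hy; move: k1 k2; rewrite /D => k1 k2; apply/andP; split; lra.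
Qed.
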